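(* Let $d\ge1$, $P\subseteq\mathbb R\times[d]$ and $k\in[d]$. The colorful Helly number of $(P,\mathcal C_{\equiv}(P))$ with respect to $k$-intersecting satisfies $h_{ck}(P,\mathcal C_{\equiv}(P))\le 2d-k+1$. That is, for any finite families $\mathcal C_1,\dots,\mathcal C_{2d-k+1}\subseteq\mathcal C_{\equiv}(P)$ such that every colorful tuple $C_1\in\mathcal C_1,\dots,C_{2d-k+1}\in\mathcal C_{2d-k+1}$ is $k$-intersecting, some family $\mathcal C_i$ is $k$-intersecting.
   Context: $[d]=\{1,\dots,d\}$. A (separated) $d$-interval is a set $I=\bigcup_{i\in[d]}\{(x,i): x\in I^{(i)}\}\subseteq\mathbb R\times[d]$ with each $I^{(i)}\subseteq\mathbb R$ convex (possibly empty); points $(x,i)$ lie in the $i$-th level. For $P\subseteq\mathbb R\times[d]$, $\mathcal C_{\equiv}(P)=\{I\cap P: I \text{ a } d\text{-interval}\}$. A collection of sets of $\mathcal C_{\equiv}(P)$ $k$-intersects (is $k$-intersecting) if its intersection contains at least $k$ points of $P$ lying in $k$ distinct levels. $h_{ck}(P,\mathcal C_{\equiv}(P))$ is the minimal $n$ such that for any $n$ finite families $\mathcal F_1,\dots,\mathcal F_n\subseteq\mathcal C_{\equiv}(P)$ in which every colorful $n$-tuple ($C_i\in\mathcal F_i$) is $k$-intersecting, some $\mathcal F_i$ is $k$-intersecting. *)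

(* Defs.v *)
From Stdlib Require Import Reals List Arith.
Import ListNotations.
Open Scope R_scope.

(* A point (x,i) of R x [d]; level i is a natural number, [d] = {1,...,d}. *)
Definition point := (R * nat)%type.
Definition pset := point -> Prop.

Definition convexR (S : R -> Prop) : Prop :=
  forall x y z, S x -> S z -> x <= y -> y <= z -> S y.

Definition is_d_interval (d : nat) (I : nat -> R -> Prop) : Prop :=
  forall i, (1 <= i <= d)%nat -> convexR (I i).

Definition d_interval_set (d : nat) (I : nat -> R -> Prop) : pset :=
  fun p => (1 <= snd p <= d)%nat /\ I (snd p) (fst p).

Definition in_C_equiv (d : nat) (P : pset) (C : pset) : Prop :=
  exists I, is_d_interval d I /\
    forall p, C p <-> (d_interval_set d I p /\ P p).

Definition k_intersecting (P : pset) (k : nat) (coll : list pset) : Prop :=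
  exists pts : list point,
    length pts = k /\ NoDup (map snd pts) /\
    (forall p, In p pts -> P p /\ forall C, In C coll -> C p).

(* Main.v *)
Require Import Defs.
From Stdlib Require Import Reals List Arith Lra Lia Classical.
Import ListNotations.
Open Scope R_scope.

Definition relconv (Q S : R -> Prop) : Prop :=
  (forall x, S x -> Q x) /\
  (forall a b m, S a -> S b -> a <= m -> m <= b -> Q m -> S m).

Lemma bet (Q S : R -> Prop) a b m : relconv Q S -> S a -> S b ->
  ((a <= m /\ m <= b) \/ (b <= m /\ m <= a)) -> Q m -> S m.
Proof. intros [_ H] Ha Hb [[]|[]] Hq; eauto. Qed.

Ltac betc S a b m := eapply (bet _ S a b m); [eassumption|eassumption|eassumption| first [left; split; lra | right; split; lra] | match goal with H: relconv _ _ |- _ => apply (proj1 H); eassumption end].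

Lemma three (Q A B C : R -> Prop) : relconv Q A -> relconv Q B -> relconv Q C ->
  (forall x, A x -> B x -> C x) \/ (forall x, A x -> C x -> B x) \/ (forall x, B x -> C x -> A x).
Proof.
  intros hA hB hC.
  apply NNPP; intro N.
  apply not_or_and in N as [N1 N].
  apply not_or_and in N as [N2 N3].
  apply not_all_ex_not in N1 as [x N1].
  apply not_all_ex_not in N2 as [y N2].
  apply not_all_ex_not in N3 as [z N3].
  apply imply_to_and in N1 as [Ax N1]; apply imply_to_and in N1 as [Bx Cx].
  apply imply_to_and in N2 as [Ay N2]; apply imply_to_and in N2 as [Cy By].
  apply imply_to_and in N3 as [Bz N3]; apply imply_to_and in N3 as [Cz Az].
  destruct (Rle_or_lt x y), (Rle_or_lt y z), (Rle_or_lt x z).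
  all: try (apply By; betc B x z y). all: try (apply Cx; betc C y z x). all: try (apply Az; betc A x y z).
Qed.

Lemma helly_pair {X : Type} (ev : X -> R -> Prop) (Q : R -> Prop) (C0 : X) (G : list X) :
  (forall C, In C (C0 :: G) -> relconv Q (ev C)) ->
  exists A B, In A (C0 :: G) /\ In B (C0 :: G) /\
    forall x, ev A x -> ev B x -> forall C, In C (C0 :: G) -> ev C x.
Proof.
  revert C0; induction G as [|C1 G IH]; intros C0 HG.
  - exists C0, C0; split; [left; auto|split; [left; auto|]].
    intros x H _ C [<-|[]]; auto.
  - destruct (IH C1) as (A & B & HA & HB & HAB).
    { intros C HC; apply HG; right; auto. }
    assert (rA : relconv Q (ev A)) by (apply HG; right; auto).
    assert (rB : relconv Q (ev B)) by (apply HG; right; auto).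
    assert (rC : relconv Q (ev C0)) by (apply HG; left; auto).
    destruct (three Q (ev A) (ev B) (ev C0) rA rB rC) as [H|[H|H]].
    + exists A, B; split; [right; auto|split; [right; auto|]].
      intros x Ax Bx C [<-|HC]; auto.
    + exists A, C0; split; [right; auto|split; [left; auto|]].
      intros x Ax Cx C [<-|HC]; auto.
    + exists B, C0; split; [right; auto|split; [left; auto|]].
      intros x Bx Cx C [<-|HC]; auto.
Qed.

Lemma core4 (Q A1 B1 A2 B2 : R -> Prop) p q r t :
  relconv Q A1 -> relconv Q B1 -> relconv Q A2 -> relconv Q B2 ->
  (forall x, A1 x -> B1 x -> False) -> (forall x, A2 x -> B2 x -> False) ->
  A1 p -> A2 p -> B1 q -> A2 q -> A1 r -> B2 r -> B1 t -> B2 t -> False.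
Proof.
  intros h1 h2 h3 h4 D1 D2 Ap1 Ap2 Bq1 Aq2 Ar1 Br2 Bt1 Bt2.
  destruct (Rle_or_lt p q), (Rle_or_lt p r), (Rle_or_lt p t),
    (Rle_or_lt q r), (Rle_or_lt q t), (Rle_or_lt r t).
  all: first [ apply (D2 r); [betc A2 p q r|assumption]
             | apply (D2 t); [betc A2 p q t|assumption]
             | apply (D2 p); [assumption|betc B2 r t p]
             | apply (D2 q); [assumption|betc B2 r t q]
             | apply (D1 q); [betc A1 p r q|assumption]
             | apply (D1 t); [betc A1 p r t|assumption]
             | apply (D1 p); [assumption|betc B1 q t p]
             | apply (D1 r); [assumption|betc B1 q t r] ].
Qed.

Lemma col_pair {X : Type} (ev : X -> R -> Prop) (Q : R -> Prop) (G1 G2 : list X) :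
  G1 <> nil -> G2 <> nil ->
  (forall C, In C G1 -> relconv Q (ev C)) ->
  (forall C, In C G2 -> relconv Q (ev C)) ->
  (forall x, ~ (forall C, In C G1 -> ev C x)) ->
  (forall x, ~ (forall C, In C G2 -> ev C x)) ->
  exists A B, In A G1 /\ In B G2 /\ forall x, ev A x -> ev B x -> False.
Proof.
  intros n1 n2 r1 r2 e1 e2.
  destruct G1 as [|a1 G1]; [congruence|]. destruct G2 as [|a2 G2]; [congruence|].
  destruct (helly_pair ev Q a1 G1 r1) as (A1 & B1 & iA1 & iB1 & H1).
  destruct (helly_pair ev Q a2 G2 r2) as (A2 & B2 & iA2 & iB2 & H2).
  apply NNPP; intro N.
  assert (M : forall A B, In A (a1 :: G1) -> In B (a2 :: G2) -> exists x, ev A x /\ ev B x).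
  { intros A B iA iB. apply NNPP; intro N2. apply N. exists A, B. split; [auto|split; [auto|]].
    intros x h1 h2; apply N2; eauto. }
  destruct (M A1 A2 iA1 iA2) as (p & p1 & p2).
  destruct (M B1 A2 iB1 iA2) as (q & q1 & q2).
  destruct (M A1 B2 iA1 iB2) as (r & s1 & s2).
  destruct (M B1 B2 iB1 iB2) as (t & t1 & t2).
  apply (core4 Q (ev A1) (ev B1) (ev A2) (ev B2) p q r t); auto.
  - intros x h h'; apply (e1 x); auto.
  - intros x h h'; apply (e2 x); auto.
Qed.

Open Scope nat_scope.

Notation rm := (remove Nat.eq_dec).

Lemma NoDup_rm a l : NoDup l -> NoDup (rm a l).
Proof.
  induction 1; simpl. constructor.
  destruct (Nat.eq_dec a x); auto. constructor; auto.
  intro h; apply in_remove in h; tauto.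
Qed.

Lemma rm_notin a l : ~ In a l -> rm a l = l.
Proof.
  induction l; simpl; auto. intro h. destruct (Nat.eq_dec a a0); [exfalso; auto|].
  f_equal; auto.
Qed.

Lemma rm_len a l : NoDup l -> length l <= S (length (rm a l)).
Proof.
  induction 1; simpl. lia.
  destruct (Nat.eq_dec a x); simpl.
  - subst. rewrite rm_notin; auto.
  - lia.
Qed.

Lemma pigeon (bad : nat -> nat -> Prop) (Js : list nat) : forall Ls,
  NoDup Js -> (forall j, In j Js -> exists l, In l Ls /\ bad j l) ->
  ~ (exists l j1 j2, In l Ls /\ In j1 Js /\ In j2 Js /\ j1 <> j2 /\ bad j1 l /\ bad j2 l) ->
  length Js <= length Ls.
Proof.
  induction Js as [|j Js IH]; intros Ls nd H N; simpl. lia.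
  inversion nd; subst.
  destruct (H j (or_introl eq_refl)) as (l & il & bl).
  assert (length Js <= length (rm l Ls)).
  { apply IH; auto.
    - intros j' ij'. destruct (H j' (or_intror ij')) as (l' & il' & bl').
      exists l'; split; auto. apply in_in_remove; auto.
      intro e; subst l'. apply N. exists l, j, j'. repeat split; simpl; auto.
      intro e; subst; auto.
    - intros (l' & j1 & j2 & h1 & h2 & h3 & h4 & h5 & h6). apply N.
      exists l', j1, j2. apply in_remove in h1. repeat split; simpl; tauto. }
  pose proof (remove_length_lt Nat.eq_dec Ls l il). lia.
Qed.

Lemma comb {X : Type} (F : nat -> list X) (x0 : X) (bad : nat -> nat -> Prop)
  (Dis : nat -> X -> X -> Prop) (c : nat) :
  forall s Js Ls,
  NoDup Js -> NoDup Ls -> length Ls <= s + c -> 2 * s + c <= length Js ->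
  (forall j, In j Js -> F j <> nil) ->
  (forall j, In j Js -> exists Bj, NoDup Bj /\ incl Bj Ls /\ s <= length Bj /\
                                   forall l, In l Bj -> bad j l) ->
  (forall l j1 j2, In l Ls -> In j1 Js -> In j2 Js -> j1 <> j2 -> bad j1 l -> bad j2 l ->
     exists A B, In A (F j1) /\ In B (F j2) /\ Dis l A B) ->
  exists sel : nat -> X, (forall j, In j Js -> In (sel j) (F j)) /\
    exists K, NoDup K /\ incl K Ls /\ length K = s /\
      forall l, In l K -> exists j1 j2, In j1 Js /\ In j2 Js /\ Dis l (sel j1) (sel j2).
Proof.
  induction s as [|s IH]; intros Js Ls ndJ ndL hL hJ hF hB hP.
  - exists (fun j => hd x0 (F j)). split.
    + intros j ij. specialize (hF j ij). destruct (F j); [congruence|left; auto].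
    + exists nil. repeat split; try constructor; try (intros ? []); auto.
  - assert (E : exists l j1 j2, In l Ls /\ In j1 Js /\ In j2 Js /\ j1 <> j2 /\ bad j1 l /\ bad j2 l).
    { apply NNPP; intro N.
      pose proof (pigeon bad Js Ls ndJ) as P.
      assert (length Js <= length Ls); [|lia].
      apply P; auto. intros j ij. destruct (hB j ij) as (Bj & _ & inc & len & bb).
      destruct Bj as [|l Bj]; simpl in len; [lia|]. exists l; split.
      apply inc; left; auto. apply bb; left; auto. }
    destruct E as (l & j1 & j2 & il & ij1 & ij2 & ne & b1 & b2).
    destruct (hP l j1 j2 il ij1 ij2 ne b1 b2) as (A & B & iA & iB & D).
    set (Js' := rm j1 (rm j2 Js)).
    assert (inJs : forall j, In j Js' -> In j Js /\ j <> j1 /\ j <> j2).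
    { intros j h. apply in_remove in h as [h h1]. apply in_remove in h as [h h2]. auto. }
    destruct (IH Js' (rm l Ls)) as (sel' & hsel' & K & ndK & incK & lenK & hK).
    + apply NoDup_rm, NoDup_rm; auto.
    + apply NoDup_rm; auto.
    + pose proof (remove_length_lt Nat.eq_dec Ls l il). lia.
    + pose proof (rm_len j2 Js ndJ). pose proof (rm_len j1 (rm j2 Js) (NoDup_rm j2 Js ndJ)).
      unfold Js'. lia.
    + intros j h; apply hF, inJs, h.
    + intros j h. destruct (hB j (proj1 (inJs j h))) as (Bj & ndB & inc & len & bb).
      exists (rm l Bj). split; [apply NoDup_rm; auto|]. split; [|split].
      * intros y hy. apply in_remove in hy as [hy ny]. apply in_in_remove; auto.
      * pose proof (rm_len l Bj ndB). lia.
      * intros y hy. apply in_remove in hy as [hy _]. auto.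
    + intros l' k1 k2 h1 h2 h3. apply hP; auto.
      apply in_remove in h1; tauto. apply inJs; auto. apply inJs; auto.
    + exists (fun j => if Nat.eq_dec j j1 then A else if Nat.eq_dec j j2 then B else sel' j).
      split.
      * intros j ij. destruct (Nat.eq_dec j j1); [subst; auto|].
        destruct (Nat.eq_dec j j2); [subst; auto|]. apply hsel'.
        unfold Js'; apply in_in_remove; auto; apply in_in_remove; auto.
      * exists (l :: K). split; [|split; [|split]].
        -- constructor; auto. intro h. apply incK in h. apply in_remove in h. tauto.
        -- intros y [<-|hy]; auto. apply incK in hy. apply in_remove in hy; tauto.
        -- simpl; lia.
        -- intros y [<-|hy].
           ++ exists j1, j2. split; auto. split; auto.
              destruct (Nat.eq_dec j1 j1); [|congruence].
              destruct (Nat.eq_dec j2 j1); [congruence|].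
              destruct (Nat.eq_dec j2 j2); [|congruence]. auto.
           ++ destruct (hK y hy) as (k1 & k2 & hk1 & hk2 & Dk).
              destruct (inJs k1 hk1) as (a1 & a2 & a3). destruct (inJs k2 hk2) as (c1 & c2 & c3).
              exists k1, k2. split; auto. split; auto.
              destruct (Nat.eq_dec k1 j1); [congruence|]. destruct (Nat.eq_dec k1 j2); [congruence|].
              destruct (Nat.eq_dec k2 j1); [congruence|]. destruct (Nat.eq_dec k2 j2); [congruence|].
              auto.
Qed.

Lemma split_good (good : nat -> Prop) (L : list nat) : NoDup L ->
  exists G Bl, NoDup G /\ NoDup Bl /\ incl G L /\ incl Bl L /\
    (forall l, In l G -> good l) /\ (forall l, In l Bl -> ~ good l) /\
    length G + length Bl = length L.
Proof.
  induction 1 as [|a L na nd IH].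
  - exists nil, nil. repeat split; try constructor; try (intros ? []).
  - destruct IH as (G & Bl & nG & nB & iG & iB & gG & gB & len).
    destruct (classic (good a)) as [ga|ga].
    + exists (a :: G), Bl. repeat split; auto.
      * constructor; auto.
      * intros y [<-|h]; [left; auto|right; auto].
      * intros y h; right; auto.
      * intros y [<-|h]; auto.
      * simpl; lia.
    + exists G, (a :: Bl). repeat split; auto.
      * constructor; auto.
      * intros y h; right; auto.
      * intros y [<-|h]; [left; auto|right; auto].
      * intros y [<-|h]; auto.
      * simpl; lia.
Qed.

Lemma choose_pts (Qp : point -> Prop) (G : list nat) :
  (forall l, In l G -> exists x, Qp (x, l)) ->
  exists pts, map snd pts = G /\ forall p, In p pts -> Qp p.
Proof.
  induction G as [|l G IH]; intros H.
  - exists nil; split; auto. intros p [].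
  - destruct (H l (or_introl eq_refl)) as [x hx].
    destruct IH as (pts & e & hp). intros l' h; apply H; right; auto.
    exists ((x, l) :: pts); split; simpl; [congruence|].
    intros p [<-|h]; auto.
Qed.

Lemma C_relconv d P C l : in_C_equiv d P C -> (1 <= l <= d)%nat ->
  relconv (fun x => P (x, l)) (fun x => C (x, l)).
Proof.
  intros (I & hI & hC) hl. split.
  - intros x h. apply hC in h. tauto.
  - intros a b m ha hb h1 h2 hq. apply hC in ha as [[_ ha] _]. apply hC in hb as [[_ hb] _].
    simpl in *. apply hC. split; auto. split; auto. simpl. exact (hI l hl a m b ha hb h1 h2).
Qed.

Lemma C_in_P d P C p : in_C_equiv d P C -> C p -> P p.
Proof. intros (I & _ & hC) h. apply hC in h. tauto. Qed.

Theorem theorem7 (d : nat) (P : pset) (k : nat)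
  (hd : (1 <= d)%nat)
  (hP : forall p, P p -> (1 <= snd p <= d)%nat)
  (hk : (1 <= k <= d)%nat)
  (F : nat -> list pset)
  (hF : forall j, (j < 2 * d - k + 1)%nat ->
          F j <> nil /\ forall C, In C (F j) -> in_C_equiv d P C)
  (hcol : forall sel : nat -> pset,
          (forall j, (j < 2 * d - k + 1)%nat -> In (sel j) (F j)) ->
          k_intersecting P k (map sel (seq 0 (2 * d - k + 1)))) :
  exists j, (j < 2 * d - k + 1)%nat /\ k_intersecting P k (F j).
Proof.
  set (n := 2 * d - k + 1) in *.
  apply NNPP; intro N.
  destruct (comb F (fun _ => False) (fun j l => ~ exists x, forall C, In C (F j) -> C (x, l))
     (fun l A B => forall x, A (x, l) -> B (x, l) -> False) (k - 1) (d - k + 1)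
     (seq 0 n) (seq 1 d)) as (sel & hsel & K & ndK & incK & lenK & hK).
  - apply seq_NoDup.
  - apply seq_NoDup.
  - rewrite length_seq; lia.
  - rewrite length_seq; unfold n; lia.
  - intros j ij. apply in_seq in ij. apply hF; lia.
  - intros j ij. apply in_seq in ij. assert (jn : j < n) by lia.
    destruct (hF j jn) as [ne hC].
    assert (ne' : exists C0, In C0 (F j)) by (destruct (F j) as [|C0 ?]; [congruence|exists C0; left; auto]).
    destruct (split_good (fun l => exists x, forall C, In C (F j) -> C (x, l)) (seq 1 d) (seq_NoDup _ _))
      as (G & Bl & nG & nB & iG & iB & gG & gB & len).
    exists Bl. split; auto. split; auto. split; [|auto].
    rewrite length_seq in len.
    enough (length G < k) by lia.
    apply Nat.nle_gt; intro kG.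
    destruct (choose_pts (fun p => forall C, In C (F j) -> C p) G gG) as (pts & ep & hp).
    apply N. exists j. split; auto.
    exists (firstn k pts). split; [|split].
    + rewrite length_firstn. rewrite <- ep in kG. rewrite length_map in kG. lia.
    + rewrite <- firstn_map, ep. rewrite <- (firstn_skipn k G) in nG.
      eapply NoDup_app_remove_r; eauto.
    + intros p hpp.
      assert (hp' : In p pts) by (rewrite <- (firstn_skipn k pts); apply in_or_app; left; auto).
      destruct ne' as [C0 iC0]. split.
      * apply (C_in_P d P C0 p (hC C0 iC0)). apply hp; auto.
      * apply hp; auto.
  - intros l j1 j2 il ij1 ij2 ne b1 b2.
    apply in_seq in il. apply in_seq in ij1. apply in_seq in ij2.
    destruct (hF j1 ltac:(lia)) as [n1 c1]. destruct (hF j2 ltac:(lia)) as [n2 c2].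
    apply (col_pair (fun C x => C (x, l)) (fun x => P (x, l))); auto.
    + intros C iC. apply (C_relconv d); auto. lia.
    + intros C iC. apply (C_relconv d); auto. lia.
    + intros x h. apply b1. exists x; auto.
    + intros x h. apply b2. exists x; auto.
  - destruct (hcol sel) as (pts & lp & ndp & hp).
    { intros j hj; apply hsel, in_seq; lia. }
    assert (nd : NoDup (map snd pts ++ K)).
    { apply NoDup_app; auto. intros a ha hK'.
      apply in_map_iff in ha as ([x l] & e & ip). simpl in e; subst a.
      destruct (hK l hK') as (j1 & j2 & ij1 & ij2 & D).
      destruct (hp (x, l) ip) as [_ hall].
      apply (D x); apply hall; apply in_map; auto. }
    assert (inc : incl (map snd pts ++ K) (seq 1 d)).
    { intros a ha. apply in_app_or in ha as [ha|ha].
      - apply in_map_iff in ha as (p & <- & ip). destruct (hp p ip) as [pp _].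
        apply hP in pp. apply in_seq; lia.
      - apply incK; auto. }
    pose proof (NoDup_incl_length nd inc) as L.
    rewrite length_app, length_map, length_seq in L. clear -L lp lenK hk. unfold point in *. lia.
Qed.
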